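(* Let $(X,\mathcal{T})$ be a connected door space and let $A,B$ be disjoint nonempty subsets of $X$ with $A$ open and $B$ closed. Then for every $C\subseteq X\setminus(A\cup B)$, the set $A\cup C$ is open and the set $B\cup C$ is closed.
   Context: A topological space $(X,\mathcal{T})$ is a connected door space if every proper nonempty subset of $X$ (i.e. every $A$ with $\varnothing\ne A\subsetneq X$) is either open or closed, but not both. *)

(* Defs.v *)
From Stdlib Require Import Classical.

Definition set (X : Type) := X -> Prop.

Record topology (X : Type) := Topology {
  is_open : set X -> Prop;
  open_empty : is_open (fun _ => False);
  open_full : is_open (fun _ => True);
  open_union : forall F : set X -> Prop,
      (forall U, F U -> is_open U) ->
      is_open (fun x => exists U, F U /\ U x);
  open_inter : forall U V, is_open U -> is_open V ->
      is_open (fun x => U x /\ V x)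
}.
Arguments is_open {X} t U.

Definition is_closed {X : Type} (T : topology X) (A : set X) : Prop :=
  is_open T (fun x => ~ A x).

Definition connected_door_space {X : Type} (T : topology X) : Prop :=
  forall A : set X,
    (exists x, A x) -> (exists x, ~ A x) ->
    (is_open T A \/ is_closed T A) /\ ~ (is_open T A /\ is_closed T A).

(* Main.v *)
Require Import Defs.
From Stdlib Require Import Classical FunctionalExtensionality PropExtensionality.

Lemma open_ext {X : Type} (T : topology X) (U V : set X) :
  (forall x, U x <-> V x) -> is_open T U -> is_open T V.
Proof.
  intros H HU. replace V with U; auto.
  apply functional_extensionality; intro x; apply propositional_extensionality; auto.
Qed.

Lemma open_or {X : Type} (T : topology X) (U V : set X) :
  is_open T U -> is_open T V -> is_open T (fun x => U x \/ V x).
Proof.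
  intros HU HV.
  pose proof (open_union X T (fun W => W = U \/ W = V)) as H.
  eapply open_ext; [|apply H].
  - intro x; split.
    + intros [W [[-> | ->] Hw]]; auto.
    + intros [Hx|Hx]; eauto.
  - intros W [-> | ->]; auto.
Qed.

Lemma part1 (X : Type) (T : topology X) (A B C : set X) :
  connected_door_space T ->
  (forall x, A x -> B x -> False) ->
  (exists x, A x) ->
  (exists x, B x) ->
  is_open T A ->
  is_closed T B ->
  (forall x, C x -> ~ A x /\ ~ B x) ->
  is_open T (fun x => A x \/ C x).
Proof.
  intros Hd Hdis [a Ha] [b Hb] HA HB HC.
  assert (Hne : exists x, ~ (A x \/ C x)).
  { exists b. intros [H|H]; [eauto|]. destruct (HC b H); tauto. }
  destruct (Hd (fun x => A x \/ C x)) as [[Ho|Hc] _]; eauto.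
  exfalso. unfold is_closed in *.
  assert (HCne : exists c, C c).
  { destruct (classic (exists c, C c)) as [h|h]; auto. exfalso.
    destruct (Hd (fun x => A x \/ C x)) as [_ Hn]; eauto.
    apply Hn; split; [|auto]. eapply open_ext; [|apply HA].
    intro x; split; [intro h'; left; auto | intros [h'|h']; [auto| exfalso; eauto]]. }
  destruct HCne as [c Hc0].
  destruct (Hd (fun x => A x \/ B x)) as [[Ho2|Hc2] _].
  - eauto.
  - exists c. destruct (HC c Hc0); tauto.
  -
    destruct (Hd B) as [_ Hn]; [eauto| exists a; intro; eauto |].
    apply Hn; split; auto.
    eapply open_ext; [|apply (open_inter X T _ _ Ho2 Hc)].
    intro x; split.
    + intros [[H|H] H']; [tauto|auto].
    + intro H; split; [tauto|]. intros [H'|H']; [eauto|destruct (HC x H'); tauto].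
  - destruct (Hd A) as [_ Hn]; [eauto| exists b; intro; eauto |].
    apply Hn; split; auto. unfold is_closed.
    eapply open_ext; [|apply (open_or T _ _ Hc2 Hc)].
    intro x; split.
    + intros [H|H] H'; tauto.
    + intro H. destruct (classic (B x)); [|tauto]. destruct (classic (C x)); [|tauto].
      destruct (HC x H1); tauto.
Qed.

Theorem lemma1 (X : Type) (T : topology X) (A B C : set X) :
  connected_door_space T ->
  (forall x, A x -> B x -> False) ->
  (exists x, A x) ->
  (exists x, B x) ->
  is_open T A ->
  is_closed T B ->
  (forall x, C x -> ~ A x /\ ~ B x) ->
  is_open T (fun x => A x \/ C x) /\ is_closed T (fun x => B x \/ C x).
Proof.
  intros Hd Hdis HA0 HB0 HA HB HC.
  split; [eapply part1; eauto|].
  destruct HA0 as [a Ha], HB0 as [b Hb].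
  assert (Hne : exists x, ~ (B x \/ C x)).
  { exists a. intros [H|H]; [eauto|]. destruct (HC a H); tauto. }
  destruct (Hd (fun x => B x \/ C x)) as [[Ho|Hc] _]; eauto.
  exfalso.
    assert (HAD : is_open T (fun x => A x \/ ~ (A x \/ B x \/ C x))).
    { eapply part1; eauto. intros x H; split; intro; apply H; tauto. }
    destruct (Hd (fun x => A x \/ ~ (A x \/ B x \/ C x))) as [_ Hn].
    + eauto.
    + exists b. intros [H|H]; [eauto|tauto].
    + apply Hn; split; auto. unfold is_closed.
      eapply open_ext; [|apply Ho]. intro x; split.
      * intros [H|H] [H'|H']; [eauto| tauto | destruct (HC x H); tauto | tauto].
      * intro H. destruct (classic (B x)); [tauto|]. destruct (classic (C x)); [tauto|].
        exfalso; apply H. destruct (classic (A x)); [tauto|]. right; tauto.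
Qed.
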